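(* Let $c_1,\dots,c_l\in\mathbb{R}[z_1,\dots,z_m]$ with $l\ge m$ be the constraint polynomials of a framework (as described in the context), let $\mathbf{R}(z)$ be its $m\times l$ rigidity matrix with entries $\mathbf{R}(z)_{ij}=\partial c_j/\partial z_i$, let $p_1,\dots,p_\mu$ ($\mu=\binom{l}{l-m}$) be all $m\times m$ minors of $\mathbf{R}(z)$, and let $V_1\subset\mathbb{R}^m$ be the shakiness variety, i.e. the common zero set of $p_1,\dots,p_\mu$. Assume $V_1\neq\mathbb{R}^m$. If $X$ is a regular point of $V_1$, then $\operatorname{rk}\mathbf{R}(X)=m-1$; equivalently, at $X$ there is, up to a nonzero scalar factor, exactly one non-trivial infinitesimal (instantaneous) flex, i.e. the space of vectors $v\in\mathbb{R}^m$ with $\nabla c_j(X)\cdot v=0$ for all $j=1,\dots,l$ is one-dimensional.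
   Context: A planar (resp. spatial) bar-joint framework with $w$ joints $X_1,\dots,X_w$ and $e$ bars of prescribed non-zero lengths is described algebraically by unknowns $z_1,\dots,z_m$ (the joint coordinates, $m=2w$ resp. $m=3w$) and $l$ polynomial equations $c_1=\dots=c_l=0$: one quadratic equation per bar (squared distance of its endpoints equals the squared bar length), or a linear equation when a joint is an ideal point, together with 3 (resp. 6) linear equations eliminating the Euclidean isometries (so $l=e+3$ resp. $l=e+6$). Each hypersurface $c_j=0$ is a hyperplane or a regular hyperquadric. Because isometries are eliminated by the linear constraints, every nonzero vector $v$ with $\nabla c_j(X)\cdot v=0$ for all $j$ is a non-trivial infinitesimal flex at the configuration $X$. A point $X\in V_1$ is called regular if the Jacobian matrix of $(p_1,\dots,p_\mu)$ at $X$ has rank equal to $m-\dim_X V_1$ (Jacobian criterion). *)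

(* Defs.v *)
From mathcomp Require Import all_boot all_order all_algebra.
From mathcomp Require Import mpoly.
From mathcomp Require Import reals.
Set Implicit Arguments. Unset Strict Implicit. Unset Printing Implicit Defensive.
Import Order.TTheory GRing.Theory Num.Theory.
Local Open Scope ring_scope.

Section Framework.
Variables (R : realType) (m l : nat).

Definition rigidity_matrix (c : 'I_l -> {mpoly R[m]}) : 'M[{mpoly R[m]}]_(m, l) :=
  \matrix_(i < m, j < l) mderiv i (c j).

Definition rigidity_at (c : 'I_l -> {mpoly R[m]}) (X : 'I_m -> R) : 'M[R]_(m, l) :=
  \matrix_(i < m, j < l) (mderiv i (c j)).@[X].

(* A choice of m columns among l, as a strictly increasing map 'I_m -> 'I_l;
   there are exactly binomial(l, m) of them. *)
Definition col_choice := {f : {ffun 'I_m -> 'I_l} | [forall i : 'I_m, forall j : 'I_m, (i < j)%N ==> (f i < f j)%N]}.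

Definition minor_poly (c : 'I_l -> {mpoly R[m]}) (f : col_choice) : {mpoly R[m]} :=
  \det (colsub (val f) (rigidity_matrix c)).

Definition shakiness_variety (c : 'I_l -> {mpoly R[m]}) : ('I_m -> R) -> Prop :=
  fun X => forall f : col_choice, (minor_poly c f).@[X] = 0.

Definition minors_jacobian (c : 'I_l -> {mpoly R[m]}) (X : 'I_m -> R)
  : 'M[R]_(m, #|{: col_choice}|) :=
  \matrix_(i < m, k < #|{: col_choice}|) (mderiv i (minor_poly c (enum_val k))).@[X].

End Framework.

Section Dimension.
Variables (R : realType) (m : nat).

Definition in_ball (X : 'I_m -> R) (eps : R) (x : 'I_m -> R) : Prop :=
  forall i, `|x i - X i| < eps.

Definition proj_has_interior (A : ('I_m -> R) -> Prop) (d : nat) : Prop :=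
  exists (f : 'I_d -> 'I_m), injective f /\
  exists (y : 'I_d -> R) (r : R), 0 < r /\
    forall z : 'I_d -> R, (forall k, `|z k - y k| < r) ->
      exists x, A x /\ forall k, x (f k) = z k.

(* Semialgebraic dimension of A is >= d. *)
Definition dim_ge (A : ('I_m -> R) -> Prop) (d : nat) : Prop := proj_has_interior A d.

(* local dimension of V at X equals d: dim (V \cap B(X,eps)) >= d for all eps > 0,
   but not >= d+1 for all eps > 0 (i.e. d = lim_{eps->0} dim (V \cap B(X,eps))). *)
Definition local_dim (V : ('I_m -> R) -> Prop) (X : 'I_m -> R) (d : nat) : Prop :=
  (forall eps : R, 0 < eps -> dim_ge (fun x => V x /\ in_ball X eps x) d) /\
  ~ (forall eps : R, 0 < eps -> dim_ge (fun x => V x /\ in_ball X eps x) d.+1).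

End Dimension.

(* Regular point of V_1 (Jacobian criterion). *)
Definition regular_point (R : realType) (m l : nat) (c : 'I_l -> {mpoly R[m]})
  (X : 'I_m -> R) : Prop :=
  shakiness_variety c X /\
  exists d : nat, local_dim (shakiness_variety c) X d /\
    \rank (minors_jacobian c X) = (m - d)%N.

(* Main.v *)
Require Import Defs.
From mathcomp Require Import all_boot all_order all_algebra.
From mathcomp Require Import mpoly.
From mathcomp Require Import reals.
From mathcomp Require Import all_fingroup.
From mathcomp Require Import ring.
Import Order.TTheory GRing.Theory Num.Theory.
Local Open Scope ring_scope.
Set Implicit Arguments. Unset Strict Implicit.


Lemma rank_colsub (F : fieldType) m n n' (g : 'I_n' -> 'I_n) (A : 'M[F]_(m,n)) :
  (\rank (colsub g A) <= \rank A)%N.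
Proof.
have -> : colsub g A = A *m colsub g 1%:M by rewrite mulmx_colsub mulmx1.
exact: mxrankM_maxl.
Qed.

Lemma rank_rowsub (F : fieldType) m n m' (g : 'I_m' -> 'I_m) (A : 'M[F]_(m,n)) :
  (\rank (rowsub g A) <= \rank A)%N.
Proof. by rewrite mxrankS // rowsub_sub. Qed.

Lemma sorted_enum_set l (S : {set 'I_l}) : sorted (fun x y : 'I_l => (x < y)%N) (enum S).
Proof.
have -> : enum S = filter (mem S) (enum 'I_l) by rewrite enumT.
apply: sorted_filter; first by move=> x y z; apply: ltn_trans.
have := iota_ltn_sorted 0 l; rewrite -val_enum_ord sorted_map.
by [].
Qed.

Lemma full_minor (F : fieldType) m l (A : 'M[F]_(m,l)) : \rank A = m ->
  exists f : col_choice m l, \det (colsub (val f) A) != 0.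
Proof.
move=> rA.
have rfT : row_full A^T by rewrite /row_full mxrank_tr rA.
pose h := fullrankfun rfT.
have hinj : injective h by apply: fullrankfun_inj.
have rh : \rank (colsub h A) = m.
  have -> : colsub h A = (rowsub h A^T)^T by apply/matrixP => i j; rewrite !mxE.
  by rewrite mxrank_tr mxrank_unit // fullrowsub_unit.
pose S := [set h i | i in 'I_m].
have cS : #|S| = m by rewrite card_imset // card_ord.
pose g0 (i : 'I_m) : 'I_l := enum_val (cast_ord (esym cS) i).
have g0mono : forall i j : 'I_m, (i < j)%N -> (g0 i < g0 j)%N.
  move=> i j lij; rewrite /g0 !(enum_val_nth (h i)).
  have tr : transitive (fun x y : 'I_l => (x < y)%N).
    by move=> y x z; apply: ltn_trans.
  have := @sorted_ltn_nth _ _ tr (h i) _ (sorted_enum_set S).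
  apply; rewrite ?inE -?cardE ?ltn_ord //.
pose gf : {ffun 'I_m -> 'I_l} := finfun g0.
have gP : [forall i : 'I_m, forall j : 'I_m, (i < j)%N ==> (gf i < gf j)%N].
  apply/forallP => i; apply/forallP => j; apply/implyP => lij.
  by rewrite !ffunE g0mono.
exists (exist _ gf gP) => /=.
have hS : forall i, h i \in S by move=> i; apply: imset_f.
pose sig (i : 'I_m) : 'I_m := cast_ord cS (enum_rank_in (hS i) (h i)).
have e : colsub h A = colsub sig (colsub gf A).
  apply/matrixP => i j; rewrite !mxE; congr (A i _).
  rewrite [gf _]ffunE /g0 /sig.
  have -> : forall (k : 'I_#|S|), cast_ord (esym cS) (cast_ord cS k) = k by move=> k; apply: val_inj.
  by rewrite enum_rankK_in.
have rg : \rank (colsub gf A) = m.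
  apply/eqP; rewrite eqn_leq rank_leq_row /=.
  by rewrite -{1}rh e rank_colsub.
have : row_free (colsub gf A) by rewrite /row_free rg.
by rewrite row_free_unit unitmxE unitfE.
Qed.


Section C.
Variables (R : comRingType) (n : nat) (i : 'I_n).
Local Notation D := (mderiv i).

Lemma mderiv_prod k (F : 'I_k -> {mpoly R[n]}) :
  D (\prod_(j < k) F j) =
  \sum_(j0 < k) \prod_(j < k) (if j == j0 then D (F j) else F j).
Proof.
elim: k F => [|k IH] F.
  by rewrite big_ord0 big_ord0 -(mpolyC1) mderivC.
rewrite big_ord_recr /= mderivM IH big_distrl /= big_ord_recr /=.
congr (_ + _).
  apply: eq_bigr => j0 _; rewrite big_ord_recr /=.
  have -> : (ord_max == widen_ord (leqnSn k) j0) = false.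
    by apply/negbTE; rewrite neq_ltn /= ltn_ord orbT.
  by congr (_ * _).
rewrite big_ord_recr /= eqxx; congr (_ * _).
apply: eq_bigr => j _.
have -> : (widen_ord (leqnSn k) j == ord_max) = false.
  by apply/negbTE; rewrite neq_ltn /= ltn_ord.
by [].
Qed.

Lemma mderiv_det k (A : 'M[{mpoly R[n]}]_k) :
  D (\det A) = \sum_(r < k) \sum_(j < k) D (A r j) * cofactor A r j.
Proof.
have step1 : D (\det A) = \sum_(r < k) \det (\matrix_(a, b) if a == r then D (A a b) else A a b).
  rewrite /determinant raddf_sum /=.
  under eq_bigr => s _.
    have -> : D ((-1) ^+ s * \prod_i0 A i0 (s i0)) = (-1) ^+ s * D (\prod_i0 A i0 (s i0)).
      case: (odd_perm s) => /=; rewrite ?expr1 ?expr0 ?mulN1r ?mul1r ?mderivN //.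
    rewrite mderiv_prod big_distrr /=.
    over.
  rewrite exchange_big /=; apply: eq_bigr => r _; apply: eq_bigr => s _.
  congr (_ * _); apply: eq_bigr => a _; rewrite mxE.
  by case: (a == r).
rewrite step1; apply: eq_bigr => r _.
rewrite (expand_det_row _ r); apply: eq_bigr => j _.
rewrite mxE eqxx; congr (_ * _).
rewrite /cofactor; congr (_ * _); congr (\det _).
apply/matrixP => a b; rewrite !mxE.
by rewrite eq_sym (negbTE (neq_lift r a)).
Qed.
End C.


Lemma line_zero (R : realType) n (p : {mpoly R[n]}) (x0 Y : 'I_n -> R) (r : R) :
  0 < r -> (forall w, (forall i, `|w i - x0 i| < r) -> p.@[w] = 0) -> p.@[Y] = 0.
Proof.
move=> r0 H.
pose q : {poly R} := mmap (@polyC R) (fun i => (x0 i)%:P + (Y i - x0 i)%:P * 'X) p.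
have qE : forall t, q.[t] = p.@[fun i => x0 i + (Y i - x0 i) * t].
  move=> t; rewrite /q /mmap mevalE horner_sum; apply: eq_bigr => mm _.
  rewrite hornerM hornerC /mmap1 horner_prod; congr (_ * _); apply: eq_bigr => j _.
  by rewrite !hornerE.
pose M := 1 + \sum_i `|Y i - x0 i|.
have M0 : 0 < M by rewrite /M ltr_pwDl // sumr_ge0.
have YM : forall i, `|Y i - x0 i| <= M.
  move=> i; rewrite /M (bigD1 i) //= addrCA lerDl addr_ge0 // sumr_ge0 //.
suff q0 : q = 0.
  have := qE 1; rewrite q0 horner0 => /esym E.
  rewrite -{}E; apply: meval_eq => i /=; rewrite mulr1 addrC subrK //.
pose N := size q.
pose del := r / (N%:R * M + 1).
have NM0 : 0 < N%:R * M + 1 by apply: ltr_wpDl; [rewrite mulr_ge0 // ltW | exact: ltr01].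
have del0 : 0 < del by rewrite divr_gt0.
pose rs := [seq k%:R * del | k <- iota 0 N].
apply: (@roots_geq_poly_eq0 _ q rs).
- apply/allP => t /mapP [k]; rewrite mem_iota add0n => /andP [_ kN] ->.
  rewrite /root qE; apply/eqP/H => i /=; rewrite addrC addKr normrM.
  rewrite (ger0_norm (mulr_ge0 (ler0n _ _) (ltW del0))).
  apply: (le_lt_trans (ler_wpM2r (mulr_ge0 (ler0n _ _) (ltW del0)) (YM i))).
  have -> : M * (k%:R * del) = r * ((k%:R * M) / (N%:R * M + 1)).
    by rewrite /del; field; rewrite gt_eqF.
  rewrite gtr_pMr // ltr_pdivrMr // mul1r.
  apply: (@le_lt_trans _ _ (N%:R * M)); last by rewrite ltrDl ltr01.
  by rewrite ler_wpM2r ?ler_nat ?(ltW M0) // ltnW.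
- rewrite map_inj_uniq ?iota_uniq //.
  move=> a b /(mulIf (lt0r_neq0 del0)) /eqP; rewrite eqr_nat => /eqP //.
- by rewrite size_map size_iota.
Qed.

Lemma eval_colsub (R : realType) m l (c : 'I_l -> {mpoly R[m]}) (X : 'I_m -> R) (f : col_choice m l) :
  map_mx (meval X) (colsub (val f) (rigidity_matrix c)) = colsub (val f) (rigidity_at c X).
Proof. by apply/matrixP => a b; rewrite !mxE. Qed.

Lemma grad_minor_zero (R : realType) m l (c : 'I_l -> {mpoly R[m]}) (X : 'I_m -> R)
  (f : col_choice m l) (i : 'I_m) :
  (\rank (rigidity_at c X) < m.-1)%N -> (mderiv i (minor_poly c f)).@[X] = 0.
Proof.
move=> rk; rewrite /minor_poly mderiv_det rmorph_sum big1 // => r _.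
rewrite rmorph_sum big1 // => j _; rewrite rmorphM /=.
suff -> : (cofactor (colsub (val f) (rigidity_matrix c)) r j).@[X] = 0 by rewrite mulr0.
rewrite /cofactor rmorphM rmorph_sign /= -det_map_mx map_row' map_col' eval_colsub.
set N := row' r _.
suff -> : \det N = 0 by rewrite mulr0.
apply/eqP; apply: contraTT rk => dN; rewrite -leqNgt.
have : N \in unitmx by rewrite unitmxE unitfE.
move/mxrank_unit => <-.
rewrite /N row'Esub col'Esub; apply: leq_trans (rank_rowsub _ _) _.
apply: leq_trans (rank_colsub _ _) _; exact: rank_colsub.
Qed.

Lemma aux1 (a b : nat) : (a < b)%N -> ~ (a < b.-1)%N -> a = (b - 1)%N.
Proof.
case: b => [//|b] /=; rewrite subn1 /= ltnS leq_eqVlt => /orP [/eqP -> //| h] [].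
exact: h.
Qed.

Lemma aux2 (a b : nat) : (a < b)%N -> (b - (b - 1))%N = 1%N.
Proof. by case: b => [//|b] _; rewrite subn1 /= subSnn. Qed.

Unset Implicit Arguments. Set Strict Implicit.

Theorem lemma1 (R : realType) (m l : nat) (c : 'I_l -> {mpoly R[m]})
  (hlm : (m <= l)%N)
  (hdeg : forall j, (msize (c j) == 2)%N || (msize (c j) == 3)%N)
  (hV : exists Y : 'I_m -> R, ~ shakiness_variety c Y)
  (X : 'I_m -> R) (hX : regular_point c X) :
  \rank (rigidity_at c X) = (m - 1)%N /\
  \rank (kermx (rigidity_at c X)) = 1%N.
Proof.
case: hX => VX [d [[Hd _] Hrk]].
have rk_lt : (\rank (rigidity_at c X) < m)%N.
  rewrite ltn_neqAle rank_leq_row andbT; apply/eqP => /full_minor [f hf].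
  have := VX f; rewrite /minor_poly -det_map_mx eval_colsub => /eqP.
  by rewrite (negbTE hf).
have rk_ge : ~ (\rank (rigidity_at c X) < m.-1)%N.
  move=> rk.
  have J0 : minors_jacobian c X = 0.
    by apply/matrixP => i k; rewrite !mxE grad_minor_zero.
  move: Hrk; rewrite J0 mxrank0 => /esym /eqP; rewrite subn_eq0 => md.
  have [f [finj [y [r [r0 Hy]]]]] := Hd 1 ltr01.
  have onto : forall i : 'I_m, exists k, f k = i.
    move=> i; have : i \in codom f by apply: inj_card_onto => //; rewrite !card_ord.
    by case/codomP => k ->; exists k.
  have [x0 [[Vx0 _] ex0]] := Hy y (fun k => ltac:(by rewrite subrr normr0)).
  have box : forall w, (forall i, `|w i - x0 i| < r) -> shakiness_variety c w.
    move=> w hw.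
    have [x [[Vx _] ex]] := Hy (fun k => w (f k)) (fun k => ltac:(by rewrite -ex0; apply: hw)).
    move=> g; rewrite -(Vx g); apply: meval_eq => i.
    by have [k <-] := onto i; rewrite ex.
  case: hV => Y; apply => g.
  apply: (@line_zero _ _ _ x0 Y r r0) => w hw; exact: box w hw g.
have rk : \rank (rigidity_at c X) = (m - 1)%N by apply: aux1.
split => //; rewrite mxrank_ker rk; exact: aux2 rk_lt.
Qed.
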